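(* Let $\rho\in\mathbb R$ and let $\kappa_{\mathbf a}:\mathbb H_\rho\times\mathbb H_\rho\to\mathbb C$ be a positive semi-definite Dirichlet series kernel with coefficient matrix $\mathbf a=(a_{m,n})$. Then $\mathbf a$ is self-adjoint, i.e. $a_{m,n}=\overline{a_{n,m}}$ for all $m,n\ge1$.
   Context: $\mathbb H_\rho=\{\Re s>\rho\}$. $\kappa_{\mathbf a}(s,u)=\sum_{m,n\ge1}a_{m,n}m^{-s}n^{-\bar u}$ is a Dirichlet series kernel on $\mathbb H_\rho$ if $(s,u)\mapsto\kappa_{\mathbf a}(s,\bar u)$ is regularly convergent on $\mathbb H_\rho\times\mathbb H_\rho$ (the double series converges at each point and every row series $\sum_m$ and column series $\sum_n$ converges there). Positive semi-definite: all finite matrices $(\kappa_{\mathbf a}(s_i,s_j))$ are positive semi-definite. *)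

(* Defs.v *)
From Stdlib Require Import Reals.
From Coquelicot Require Import Coquelicot.
Open Scope R_scope.

(* n^{-s} for a natural n >= 1 and complex s:
   n^{-s} = exp(-s ln n) = e^{-Re s ln n} (cos(-Im s ln n) + i sin(-Im s ln n)). *)
Definition npow_neg (n : nat) (s : C) : C :=
  let t := ln (INR n) in
  (exp (- Re s * t) * cos (- Im s * t), exp (- Re s * t) * sin (- Im s * t)).

Fixpoint csum1 (N : nat) (f : nat -> C) : C :=
  match N with
  | O => 0%C
  | S N' => Cplus (csum1 N' f) (f N)
  end.

Fixpoint csum0 (k : nat) (f : nat -> C) : C :=
  match k with
  | O => 0%C
  | S k' => Cplus (csum0 k' f) (f k')
  end.

Definition in_H (rho : R) (s : C) : Prop := Re s > rho.

(* term a_{m,n} m^{-s} n^{-u} of the double Dirichlet series kappa_a(s, conj u) *)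
Definition dterm (a : nat -> nat -> C) (s u : C) (m n : nat) : C :=
  Cmult (a m n) (Cmult (npow_neg m s) (npow_neg n u)).

Definition series1_to (f : nat -> C) (L : C) : Prop :=
  forall eps : R, eps > 0 -> exists K : nat, forall N : nat, (K <= N)%nat ->
    Cmod (Cminus (csum1 N f) L) < eps.

(* The double series sum_{m,n>=1} b m n converges (in the sense of Pringsheim:
   rectangular partial sums S_{M,N} converge as M, N -> oo independently) to L. *)
Definition dseries_to (b : nat -> nat -> C) (L : C) : Prop :=
  forall eps : R, eps > 0 -> exists K : nat, forall M N : nat,
    (K <= M)%nat -> (K <= N)%nat ->
    Cmod (Cminus (csum1 M (fun m => csum1 N (fun n => b m n))) L) < eps.

Definition regularly_convergent (b : nat -> nat -> C) : Prop :=
  (exists L, dseries_to b L) /\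
  (forall m : nat, (1 <= m)%nat -> exists L, series1_to (fun n => b m n) L) /\
  (forall n : nat, (1 <= n)%nat -> exists L, series1_to (fun m => b m n) L).

Definition dirichlet_kernel (rho : R) (a : nat -> nat -> C) : Prop :=
  forall s u : C, in_H rho s -> in_H rho u -> regularly_convergent (dterm a s u).

Definition kernel_value (a : nat -> nat -> C) (s u L : C) : Prop :=
  dseries_to (dterm a s (Cconj u)) L.

Definition kernel_psd (rho : R) (a : nat -> nat -> C) : Prop :=
  forall (k : nat) (s : nat -> C) (K : nat -> nat -> C),
    (forall i, (i < k)%nat -> in_H rho (s i)) ->
    (forall i j, (i < k)%nat -> (j < k)%nat -> kernel_value a (s i) (s j) (K i j)) ->
    forall c : nat -> C,
      let q := csum0 k (fun i => csum0 k (fun j =>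
                 Cmult (Cmult (Cconj (c i)) (c j)) (K i j))) in
      Im q = 0 /\ 0 <= Re q.

(* Main.v *)
Require Import Defs.
From Stdlib Require Import Reals Lra Lia.
From Coquelicot Require Import Coquelicot.
From Stdlib Require Import IndefiniteDescription.

Lemma csum1_ext N f g : (forall m, (1 <= m <= N)%nat -> f m = g m) -> csum1 N f = csum1 N g.
Proof. induction N; simpl; intros H; auto. rewrite IHN; [| intros; apply H; lia]. rewrite H; auto; lia. Qed.

Lemma csum1_plus N f g : csum1 N (fun m => Cplus (f m) (g m)) = Cplus (csum1 N f) (csum1 N g).
Proof. induction N; simpl. ring. rewrite IHN. ring. Qed.

Lemma csum1_minus N f g : csum1 N (fun m => Cminus (f m) (g m)) = Cminus (csum1 N f) (csum1 N g).
Proof. induction N; simpl. ring. rewrite IHN. ring. Qed.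

Lemma csum1_scal N c f : csum1 N (fun m => Cmult c (f m)) = Cmult c (csum1 N f).
Proof. induction N; simpl. ring. rewrite IHN. ring. Qed.

Lemma csum1_conj N f : csum1 N (fun m => Cconj (f m)) = Cconj (csum1 N f).
Proof. induction N; simpl. apply injective_projections; simpl; ring. rewrite IHN, Cplus_conj. auto. Qed.

Lemma csum1_swap M N f : csum1 M (fun m => csum1 N (fun n => f m n)) = csum1 N (fun n => csum1 M (fun m => f m n)).
Proof. induction M; simpl. induction N; simpl; auto. rewrite <- IHN. ring.
rewrite IHM. rewrite <- csum1_plus. auto. Qed.

Lemma csum1_zero N (f : nat -> C) : (forall m, (1 <= m <= N)%nat -> f m = 0%C) -> csum1 N f = 0%C.
Proof. intros H. rewrite (csum1_ext N f (fun _ => 0%C)) by (intros; apply H; auto). clear H. induction N; simpl; auto. rewrite IHN. ring. Qed.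

Lemma series1_ext f g L : (forall m, (1 <= m)%nat -> f m = g m) -> series1_to f L -> series1_to g L.
Proof. intros H Hf eps He. destruct (Hf eps He) as [K HK]. exists K; intros N HN.
rewrite <- (csum1_ext N f g) by (intros; apply H; lia). auto. Qed.

Lemma series1_scal f L c : series1_to f L -> series1_to (fun m => Cmult c (f m)) (Cmult c L).
Proof. intros Hf eps He.
destruct (Hf (eps / (Cmod c + 1))) as [K HK].
{ apply Rdiv_lt_0_compat; auto. pose proof (Cmod_ge_0 c); lra. }
exists K; intros N HN. rewrite csum1_scal.
replace (Cminus (Cmult c (csum1 N f)) (Cmult c L)) with (Cmult c (Cminus (csum1 N f) L)) by ring.
rewrite Cmod_mult. specialize (HK N HN). pose proof (Cmod_ge_0 c).
pose proof (Cmod_ge_0 (Cminus (csum1 N f) L)).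
apply Rle_lt_trans with (Cmod c * (eps / (Cmod c + 1))).
apply Rmult_le_compat_l; lra.
apply Rlt_le_trans with ((Cmod c + 1) * (eps / (Cmod c + 1))).
apply Rmult_lt_compat_r. apply Rdiv_lt_0_compat; lra. lra.
right. field. lra. Qed.

Lemma series1_minus f g L1 L2 : series1_to f L1 -> series1_to g L2 ->
  series1_to (fun m => Cminus (f m) (g m)) (Cminus L1 L2).
Proof. intros Hf Hg eps He.
destruct (Hf (eps/2)) as [K1 H1]; [lra|]. destruct (Hg (eps/2)) as [K2 H2]; [lra|].
exists (max K1 K2); intros N HN. rewrite csum1_minus.
replace (Cminus (Cminus (csum1 N f) (csum1 N g)) (Cminus L1 L2)) with
  (Cplus (Cminus (csum1 N f) L1) (Copp (Cminus (csum1 N g) L2))) by ring.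
eapply Rle_lt_trans. apply Cmod_triangle. rewrite Cmod_opp.
specialize (H1 N ltac:(lia)). specialize (H2 N ltac:(lia)). lra. Qed.

Lemma series1_conj f L : series1_to f L -> series1_to (fun m => Cconj (f m)) (Cconj L).
Proof. intros Hf eps He. destruct (Hf eps He) as [K HK]. exists K; intros N HN.
rewrite csum1_conj, <- Cminus_conj, Cmod_conj. auto. Qed.

Lemma dseries_ext f g L : (forall m n, (1 <= m)%nat -> (1 <= n)%nat -> f m n = g m n) -> dseries_to f L -> dseries_to g L.
Proof. intros H Hf eps He. destruct (Hf eps He) as [K HK]. exists K; intros M N HM HN.
rewrite <- (csum1_ext M (fun m => csum1 N (fun n => f m n))).
apply HK; lia. intros m Hm. apply csum1_ext. intros; apply H; lia. Qed.

Lemma dseries_minus f g L1 L2 : dseries_to f L1 -> dseries_to g L2 ->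
  dseries_to (fun m n => Cminus (f m n) (g m n)) (Cminus L1 L2).
Proof. intros Hf Hg eps He.
destruct (Hf (eps/2)) as [K1 H1]; [lra|]. destruct (Hg (eps/2)) as [K2 H2]; [lra|].
exists (max K1 K2); intros M N HM HN.
rewrite (csum1_ext M _ (fun m => Cminus (csum1 N (f m)) (csum1 N (g m)))) by (intros; apply csum1_minus).
rewrite csum1_minus.
set (A := csum1 M (fun m => csum1 N (f m))). set (B := csum1 M (fun m => csum1 N (g m))).
replace (Cminus (Cminus A B) (Cminus L1 L2)) with
  (Cplus (Cminus A L1) (Copp (Cminus B L2))) by ring.
eapply Rle_lt_trans. apply Cmod_triangle. rewrite Cmod_opp.
specialize (H1 M N ltac:(lia) ltac:(lia)). specialize (H2 M N ltac:(lia) ltac:(lia)).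
assert (Cmod (Cminus A L1) < eps/2) by exact H1. assert (Cmod (Cminus B L2) < eps/2) by exact H2. lra. Qed.

Lemma dseries_conjT f L : dseries_to f L -> dseries_to (fun m n => Cconj (f n m)) (Cconj L).
Proof. intros Hf eps He. destruct (Hf eps He) as [K HK]. exists K; intros M N HM HN.
rewrite (csum1_ext M _ (fun m => Cconj (csum1 N (fun n => f n m)))) by (intros; apply csum1_conj).
rewrite csum1_conj, <- Cminus_conj, Cmod_conj.
rewrite <- csum1_swap. auto. Qed.

Lemma fin_lim M (t : nat -> nat -> C) r : (forall m, (1<=m)%nat -> series1_to (t m) (r m)) ->
  forall eps, eps > 0 -> exists K, forall N, (K<=N)%nat ->
   Cmod (Cminus (csum1 M (fun m => csum1 N (t m))) (csum1 M r)) < eps.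
Proof. intros Ht. induction M; intros eps He.
- exists 0%nat; intros N _. simpl. replace (Cminus 0 0) with (RtoC 0) by ring. rewrite Cmod_0. lra.
- destruct (IHM (eps/2)) as [K1 H1]; [lra|]. destruct (Ht (S M) ltac:(lia) (eps/2)) as [K2 H2]; [lra|].
  exists (max K1 K2); intros N HN. simpl.
  set (A := csum1 M (fun m => csum1 N (t m))).
  replace (Cminus (Cplus A (csum1 N (t (S M)))) (Cplus (csum1 M r) (r (S M)))) with
   (Cplus (Cminus A (csum1 M r)) (Cminus (csum1 N (t (S M))) (r (S M)))) by ring.
  eapply Rle_lt_trans. apply Cmod_triangle.
  specialize (H1 N ltac:(lia)). specialize (H2 N ltac:(lia)). unfold A. lra.
Qed.

Lemma iterated (t : nat -> nat -> C) L r : dseries_to t L ->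
  (forall m, (1<=m)%nat -> series1_to (fun n => t m n) (r m)) -> series1_to r L.
Proof. intros Hd Hr eps He.
destruct (Hd (eps/2)) as [K HK]; [lra|]. exists K; intros M HM.
destruct (fin_lim M t r Hr (eps/2)) as [K2 H2]; [lra|].
specialize (H2 (max K K2) ltac:(lia)). specialize (HK M (max K K2) HM ltac:(lia)).
set (A := csum1 M (fun m => csum1 (max K K2) (t m))) in *.
replace (Cminus (csum1 M r) L) with (Cplus (Copp (Cminus A (csum1 M r))) (Cminus A L)) by ring.
eapply Rle_lt_trans. apply Cmod_triangle. rewrite Cmod_opp.
assert (Cmod (Cminus A L) < eps/2) by exact HK. lra. Qed.

Fixpoint rsum1 (N : nat) (f : nat -> R) : R :=
  match N with O => 0 | S N' => rsum1 N' f + f N end.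

Lemma rsum1_bound (f : nat -> C) N m : (1 <= m <= N)%nat -> Cmod (f m) <= rsum1 N (fun j => Cmod (f j)).
Proof. induction N; intros Hm; simpl. lia.
destruct (Nat.eq_dec m (S N)) as [->|Hne].
- assert (0 <= rsum1 N (fun j => Cmod (f j))). { clear. induction N; simpl. lra. pose proof (Cmod_ge_0 (f (S N))); lra. }
  lra.
- pose proof (Cmod_ge_0 (f (S N))). specialize (IHN ltac:(lia)). lra.
Qed.

Lemma bounded_terms f L : series1_to f L -> exists B, 0 <= B /\ forall m, (1<=m)%nat -> Cmod (f m) <= B.
Proof. intros Hf. destruct (Hf 1 ltac:(lra)) as [K HK].
exists (2 + rsum1 K (fun j => Cmod (f j))). split.
{ assert (0 <= rsum1 K (fun j => Cmod (f j))). { clear. induction K; simpl. lra. pose proof (Cmod_ge_0 (f (S K))); lra. } lra. }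
intros m Hm. destruct (Compare_dec.le_lt_dec m K) as [Hle|Hlt].
- pose proof (rsum1_bound f K m ltac:(lia)). lra.
- destruct m as [|m']. lia.
  assert (0 <= rsum1 K (fun j => Cmod (f j))). { clear. induction K; simpl. lra. pose proof (Cmod_ge_0 (f (S K))); lra. }
  assert (Cmod (f (S m')) <= 2); [|lra].
  replace (f (S m')) with (Cminus (Cminus (csum1 (S m') f) L) (Cminus (csum1 m' f) L)) by (simpl; ring).
  unfold Cminus at 1. eapply Rle_trans. apply Cmod_triangle. rewrite Cmod_opp.
  pose proof (HK (S m') ltac:(lia)). pose proof (HK m' ltac:(lia)).
  lra.
Qed.

Definition p (m : nat) (x : R) : R := exp (- x * ln (INR m)).

Lemma p_pos m x : 0 < p m x.
Proof. apply exp_pos. Qed.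

Lemma npow_real m x : npow_neg m (x, 0) = RtoC (p m x).
Proof. unfold npow_neg, p, RtoC, Re, Im; simpl.
rewrite Ropp_0, !Rmult_0_l, cos_0, sin_0, Rmult_1_r, Rmult_0_r. auto. Qed.

Lemma npow_real_conj m x : npow_neg m (Cconj (x, 0)) = RtoC (p m x).
Proof. replace (Cconj (x,0)) with ((x, 0) : C). apply npow_real.
unfold Cconj; simpl. rewrite Ropp_0. auto. Qed.

Lemma p_shift m x k : (1 <= m)%nat -> p m (x + INR k) = p m x * (/ INR m) ^ k.
Proof. intros Hm. unfold p.
assert (0 < INR m) by (apply lt_0_INR; lia).
replace (- (x + INR k) * ln (INR m)) with (- x * ln (INR m) + - (INR k * ln (INR m))) by ring.
rewrite exp_plus, exp_Ropp. f_equal. rewrite pow_inv. f_equal.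
rewrite <- Rpower_pow by auto. unfold Rpower. auto. Qed.

Lemma inv_sq_le x : 1 <= x -> (/ (x+1)) ^ 2 <= / x - / (x + 1).
Proof. intros Hx. rewrite pow_inv.
replace (/ x - / (x+1)) with (/ (x * (x+1))) by (field; lra).
apply Rinv_le_contravar. nra. nra. Qed.

Lemma uniq1 rho (c : nat -> C) :
  (forall s, s > rho -> series1_to (fun m => Cmult (c m) (RtoC (p m s))) 0%C) ->
  forall m, (1 <= m)%nat -> c m = 0%C.
Proof.
intros H.
set (s0 := rho + 1).
destruct (bounded_terms _ _ (H s0 ltac:(unfold s0; lra))) as [B [HB0 HB]].
assert (Hall : forall M j, (1 <= j <= M)%nat -> c j = 0%C).
2:{ intros m Hm. apply (Hall m); lia. }
induction M as [|M IH]; intros j Hj. lia.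
destruct (Nat.eq_dec j (S M)) as [->|Hne]; [|apply IH; lia].
set (M' := S M) in *.
destruct (Ceq_dec (c M') 0%C) as [E|Hc]; auto. exfalso.
set (D := Cmod (c M') * p M' s0).
assert (HD : 0 < D). { unfold D. apply Rmult_lt_0_compat. apply Cmod_gt_0; auto. apply p_pos. }
set (X := INR M').
assert (HX : 1 <= X) by (unfold X, M'; rewrite S_INR; pose proof (pos_INR M); lra).
set (q := X / (X + 1)).
assert (Hq : Rabs q < 1). { unfold q. rewrite Rabs_pos_eq. apply Rmult_lt_reg_r with (X+1). lra.
  unfold Rdiv. rewrite Rmult_assoc, Rinv_l by lra. lra. apply Rle_mult_inv_pos; lra. }
assert (Hq0 : 0 <= q) by (unfold q; apply Rle_mult_inv_pos; lra).
destruct (pow_lt_1_zero q Hq (D / (2 * (B * X + 1)))) as [k Hk].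
{ apply Rdiv_lt_0_compat. lra. nra. }
specialize (Hk k (le_n k)). rewrite Rabs_pos_eq in Hk by (apply pow_le; auto).
assert (HqB : B * X * q ^ k < D / 2).
{ assert (0 <= q ^ k) by (apply pow_le; auto).
  apply Rle_lt_trans with ((B * X + 1) * q ^ k). nra.
  apply Rlt_le_trans with ((B * X + 1) * (D / (2 * (B * X + 1)))).
  apply Rmult_lt_compat_l. nra. auto. right. field. nra. }
set (sk := s0 + INR (S (S k))).
set (f := fun m => Cmult (c m) (RtoC (p m sk))).
assert (Hf : forall m, (1 <= m)%nat -> Cmod (f m) = Cmod (c m) * p m s0 * (/ INR m) ^ (S (S k))).
{ intros m Hm. unfold f. rewrite Cmod_mult, Cmod_R, Rabs_pos_eq by (apply Rlt_le, p_pos).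
  unfold sk. rewrite p_shift by auto. ring. }
assert (Htail : forall j, Cmod (Cminus (csum1 (M' + j) f) (f M')) <=
     B * (/ (X + 1)) ^ k * (/ X - / INR (M' + j))).
{ induction j.
  - rewrite Nat.add_0_r. change (csum1 M' f) with (Cplus (csum1 M f) (f M')).
    rewrite csum1_zero. replace (Cminus (Cplus 0 (f M')) (f M')) with (RtoC 0) by ring.
    rewrite Cmod_R, Rabs_R0. fold X. replace (/ X - / X) with 0 by ring. rewrite Rmult_0_r. lra.
    intros m Hm. unfold f. rewrite (IH m) by lia. ring.
  - rewrite Nat.add_succ_r. change (csum1 (S (M' + j)) f) with (Cplus (csum1 (M' + j) f) (f (S (M' + j)))).
    replace (Cminus (Cplus (csum1 (M' + j) f) (f (S (M' + j)))) (f M')) with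
     (Cplus (Cminus (csum1 (M' + j) f) (f M')) (f (S (M' + j)))) by ring.
    eapply Rle_trans. apply Cmod_triangle.
    rewrite Hf by lia.
    set (Y := INR (M' + j)). assert (HY : X <= Y) by (unfold X, Y; apply le_INR; lia).
    rewrite S_INR. fold Y.
    assert (HcB : Cmod (c (S (M' + j))) * p (S (M' + j)) s0 <= B).
    { rewrite <- (Rabs_pos_eq (p _ s0)) by (apply Rlt_le, p_pos). rewrite <- Cmod_R, <- Cmod_mult. apply HB. lia. }
    assert (Hp1 : (/ (Y + 1)) ^ k <= (/ (X + 1)) ^ k).
    { apply pow_incr. split. apply Rlt_le, Rinv_0_lt_compat; lra. apply Rinv_le_contravar; lra. }
    assert (Hp2 : (/ (Y + 1)) ^ 2 <= / Y - / (Y + 1)) by (apply inv_sq_le; lra).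
    replace ((/ (Y + 1)) ^ S (S k)) with ((/ (Y + 1)) ^ k * (/ (Y + 1)) ^ 2) by (simpl; ring).
    assert (0 <= (/ (Y + 1)) ^ k) by (apply pow_le; apply Rlt_le, Rinv_0_lt_compat; lra).
    assert (0 <= (/ (Y + 1)) ^ 2) by (apply pow_le; apply Rlt_le, Rinv_0_lt_compat; lra).
    assert (0 <= Cmod (c (S (M' + j))) * p (S (M' + j)) s0) by (pose proof (Cmod_ge_0 (c (S (M' + j)))); pose proof (p_pos (S (M' + j)) s0); nra).
    assert (Cmod (c (S (M' + j))) * p (S (M' + j)) s0 * ((/ (Y + 1)) ^ k * (/ (Y + 1)) ^ 2)
       <= B * (/ (X + 1)) ^ k * (/ Y - / (Y + 1))).
    { replace (B * (/ (X + 1)) ^ k * (/ Y - / (Y + 1))) with (B * ((/ (X + 1)) ^ k * (/ Y - / (Y + 1)))) by ring. apply Rmult_le_compat; auto. apply Rmult_le_pos; auto. apply Rmult_le_compat; auto. }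
    fold Y in IHj. replace (B * (/ (X + 1)) ^ k * (/ X - / (Y + 1))) with (B * (/ (X + 1)) ^ k * (/ X - / Y) + B * (/ (X + 1)) ^ k * (/ Y - / (Y + 1))) by ring. lra. }
set (eps := D / 2 * (/ X) ^ (S (S k))).
assert (Heps : 0 < eps). { unfold eps. apply Rmult_lt_0_compat. lra. apply pow_lt, Rinv_0_lt_compat; lra. }
destruct (H sk ltac:(unfold sk, s0; pose proof (pos_INR (S (S k))); lra) eps Heps) as [K HK].
specialize (HK (M' + K)%nat ltac:(lia)). specialize (Htail K).
fold f in HK. replace (Cminus (csum1 (M' + K) f) 0) with (csum1 (M' + K) f) in HK by ring.
assert (HfM : Cmod (f M') <= Cmod (csum1 (M' + K) f) + Cmod (Cminus (csum1 (M' + K) f) (f M'))).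
{ replace (f M') with (Cplus (csum1 (M' + K) f) (Copp (Cminus (csum1 (M' + K) f) (f M')))) at 1 by ring.
  eapply Rle_trans. apply Cmod_triangle. rewrite Cmod_opp. lra. }
rewrite Hf in HfM by (unfold M'; lia). fold D X in HfM.
assert (0 < / INR (M' + K)) by (apply Rinv_0_lt_compat, lt_0_INR; unfold M'; lia).
assert (0 <= (/ (X + 1)) ^ k) by (apply pow_le; apply Rlt_le, Rinv_0_lt_compat; lra).
assert (Htail2 : Cmod (Cminus (csum1 (M' + K) f) (f M')) <= B * (/ (X + 1)) ^ k * / X).
{ eapply Rle_trans. apply Htail. apply Rmult_le_compat_l. nra. lra. }
assert (Hid : B * (/ (X + 1)) ^ k * / X = B * X * q ^ k * (/ X) ^ (S (S k))).
{ unfold q. unfold Rdiv. rewrite Rpow_mult_distr. rewrite !pow_inv.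
  replace (X ^ S (S k)) with (X ^ k * X * X) by (simpl; ring).
  assert (X ^ k <> 0) by (apply pow_nonzero; lra). field. split; [|split]; try lra.
  apply pow_nonzero; lra. }
assert (HXk : 0 < (/ X) ^ (S (S k))) by (apply pow_lt, Rinv_0_lt_compat; lra).
assert (B * X * q ^ k * (/ X) ^ (S (S k)) < D / 2 * (/ X) ^ (S (S k))) by (apply Rmult_lt_compat_r; auto).
unfold eps in HK. lra.
Qed.

Lemma RtoC_mul' x y : RtoC (x * y) = Cmult (RtoC x) (RtoC y).
Proof. unfold RtoC, Cmult; simpl. apply injective_projections; simpl; ring. Qed.

Lemma conj_RtoC x : Cconj (RtoC x) = RtoC x.
Proof. unfold RtoC, Cconj; simpl. rewrite Ropp_0. auto. Qed.

Lemma RtoC_inv_l x : x <> 0 -> Cmult (RtoC (/ x)) (RtoC x) = 1%C.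
Proof. intros Hx. rewrite <- RtoC_mul', Rinv_l by auto. auto. Qed.

Definition Tb (b : nat -> nat -> C) (s t : R) (m n : nat) : C :=
  Cmult (b m n) (Cmult (RtoC (p m s)) (RtoC (p n t))).

Lemma uniq2 rho (b : nat -> nat -> C) :
 (forall s t, s > rho -> t > rho -> dseries_to (Tb b s t) 0%C /\
    forall m, (1<=m)%nat -> exists L, series1_to (fun n => Tb b s t m n) L) ->
 forall m n, (1<=m)%nat -> (1<=n)%nat -> b m n = 0%C.
Proof.
intros H m n Hm Hn.
refine (uniq1 rho (fun n => b m n) _ n Hn).
intros t Ht.
set (s0 := rho + 1).
assert (Hex : forall m', exists L, (1 <= m')%nat -> series1_to (fun n => Tb b s0 t m' n) L).
{ intros m'. destruct (Compare_dec.le_lt_dec 1 m') as [Hle|Hlt].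
  - destruct (proj2 (H s0 t ltac:(unfold s0; lra) Ht) m' Hle) as [L HL]. exists L; auto.
  - exists 0%C. intros; lia. }
set (r0 := fun m' => proj1_sig (constructive_indefinite_description _ (Hex m'))).
assert (Hr0 : forall m', (1 <= m')%nat -> series1_to (fun n => Tb b s0 t m' n) (r0 m')).
{ intros m' Hm'. unfold r0. destruct (constructive_indefinite_description _ (Hex m')) as [L HL]. simpl. auto. }
assert (Hc : forall m', (1 <= m')%nat -> Cmult (r0 m') (RtoC (/ p m' s0)) = 0%C).
{ apply (uniq1 rho (fun m' => Cmult (r0 m') (RtoC (/ p m' s0)))).
  intros s Hs.
  apply (iterated (Tb b s t)). apply (proj1 (H s t Hs Ht)).
  intros m' Hm'.
  eapply series1_ext.
  2:{ replace (Cmult (Cmult (r0 m') (RtoC (/ p m' s0))) (RtoC (p m' s))) with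
        (Cmult (Cmult (RtoC (p m' s)) (RtoC (/ p m' s0))) (r0 m')) by ring.
      apply series1_scal. apply Hr0; auto. }
  intros n' _. unfold Tb.
  transitivity (Cmult (Cmult (RtoC (p m' s)) (Cmult (RtoC (/ p m' s0)) (RtoC (p m' s0)))) (Cmult (b m' n') (RtoC (p n' t)))).
  ring. rewrite RtoC_inv_l by (apply Rgt_not_eq, p_pos). ring. }
assert (Hrm : r0 m = 0%C).
{ specialize (Hc m Hm).
  transitivity (Cmult (Cmult (r0 m) (RtoC (/ p m s0))) (RtoC (p m s0))).
  rewrite <- Cmult_assoc, RtoC_inv_l by (apply Rgt_not_eq, p_pos). ring.
  rewrite Hc. ring. }
specialize (Hr0 m Hm). rewrite Hrm in Hr0.
apply (series1_scal _ _ (RtoC (/ p m s0))) in Hr0.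
assert (E0 : Cmult (RtoC (/ p m s0)) (RtoC 0) = RtoC 0) by ring. rewrite E0 in Hr0.
eapply series1_ext; [|exact Hr0].
intros n' _. unfold Tb.
transitivity (Cmult (Cmult (RtoC (/ p m s0)) (RtoC (p m s0))) (Cmult (b m n') (RtoC (p n' t)))).
ring. rewrite RtoC_inv_l by (apply Rgt_not_eq, p_pos). ring.
Qed.

Lemma dterm_real (a : nat -> nat -> C) s t m n :
  dterm a (s, 0) (Cconj (t, 0)) m n = Tb a s t m n.
Proof. unfold dterm, Tb. rewrite npow_real, npow_real_conj. auto. Qed.

Theorem lemma2p4 (rho : R) (a : nat -> nat -> C) :
  dirichlet_kernel rho a -> kernel_psd rho a ->
  forall m n : nat, (1 <= m)%nat -> (1 <= n)%nat -> a m n = Cconj (a n m).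
Proof.
intros Hk Hpsd m n Hm Hn.
set (b := fun m n => Cminus (a m n) (Cconj (a n m))).
assert (Hb : b m n = 0%C).
2:{ replace (a m n) with (Cplus (b m n) (Cconj (a n m))) by (unfold b; ring). rewrite Hb. ring. }
apply (uniq2 rho b); auto.
intros s t Hs Ht.
assert (HH : forall x y, x > rho -> y > rho -> regularly_convergent (dterm a (x, 0) (Cconj (y, 0)))).
{ intros x y Hx Hy. apply Hk; unfold in_H, Re, Cconj; simpl; lra. }
destruct (HH s t Hs Ht) as [[L1 HL1] [R1 C1]].
destruct (HH t s Ht Hs) as [[L2 HL2] [R2 C2]].
destruct (HH s s Hs Hs) as [[L3 HL3] _].
destruct (HH t t Ht Ht) as [[L4 HL4] _].
set (sp := fun i : nat => match i with O => ((s, 0) : C) | _ => ((t, 0) : C) end).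
set (K := fun i j : nat => match i, j with O, O => L3 | O, _ => L1 | _, O => L2 | _, _ => L4 end).
assert (HP := Hpsd 2%nat sp K).
assert (HP' : forall c : nat -> C, let q := csum0 2 (fun i => csum0 2 (fun j =>
                 Cmult (Cmult (Cconj (c i)) (c j)) (K i j))) in Im q = 0 /\ 0 <= Re q).
{ apply HP.
  - intros i Hi. destruct i as [|[|i]]; unfold sp, in_H, Re; simpl; lra.
  - intros i j Hi Hj. unfold kernel_value.
    destruct i as [|[|i]]; [| |lia]; destruct j as [|[|j]]; try lia; simpl; auto. }
clear HP.
assert (E1 := proj1 (HP' (fun i => match i with O => RtoC 1 | _ => RtoC 0 end))).
assert (E2 := proj1 (HP' (fun i => match i with O => RtoC 0 | _ => RtoC 1 end))).
assert (E3 := proj1 (HP' (fun i => match i with O => RtoC 1 | _ => RtoC 1 end))).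
assert (E4 := proj1 (HP' (fun i => match i with O => RtoC 1 | _ => Ci end))).
clear HP'.
unfold K in E1, E2, E3, E4.
destruct L1 as [x1 y1]; destruct L2 as [x2 y2]; destruct L3 as [x3 y3]; destruct L4 as [x4 y4].
simpl in E1, E2, E3, E4.
assert (HL : Cminus (x1, y1) (Cconj (x2, y2)) = 0%C).
{ apply injective_projections; simpl; nra. }
split.
- rewrite <- HL. eapply dseries_ext; [|apply (dseries_minus _ _ _ _ HL1 (dseries_conjT _ _ HL2))].
  intros m' n' _ _. simpl. rewrite !dterm_real. unfold Tb, b.
  rewrite !Cmult_conj, !conj_RtoC. ring.
- intros m' Hm'.
  destruct (R1 m' Hm') as [La HLa]. destruct (C2 m' Hm') as [Lb HLb].
  exists (Cminus La (Cconj Lb)).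
  eapply series1_ext; [|apply (series1_minus _ _ _ _ HLa (series1_conj _ _ HLb))].
  intros n' _. simpl. rewrite !dterm_real. unfold Tb, b.
  rewrite !Cmult_conj, !conj_RtoC. ring.
Qed.
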